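(* There exists an instance of the brand-effects model in which the total expected welfare of the greedy allocation is strictly smaller than the total expected welfare (evaluated in the brand-effects model) of the allocation selected by the standard model without brand effects, i.e., the allocation that places ads in positions $1,\dots,s$ in decreasing order of their eCPM bids $b_i q_i$.
   Context: Brand-effects model: there are $s$ positions and a set of advertisers, each either a brand advertiser or a non-brand advertiser; advertiser $i$ has quality score $q_i \ge 0$ and bid $b_i \ge 0$, and its eCPM bid is $b_i q_i$. Each position $k$ has two quality scores $\beta_k$ and $\eta_k$, both non-increasing in $k$, normalized so $\beta_1=\eta_1=1$. A brand (resp. non-brand) advertiser with quality $q$ shown in position $k$ is clicked with probability $\beta_k q$ (resp. $\eta_k q$). An allocation places distinct advertisers in the positions; its total expected welfare is $\sum_j b_{(j)} p_{(j)}$, where $b_{(j)}$ and $p_{(j)}$ are the bid and click probability of the ad in position $j$. The normalized eCPM of advertiser $i$ for position $k$ is $\beta_k b_i q_i$ for a brand advertiser and $\eta_k b_i q_i$ for a non-brand advertiser. The greedy allocation is defined by, for $k=1,\dots,s$ in order, placing in position $k$ the not-yet-placed ad with the highest normalized eCPM for position $k$. *)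

(* Defs.v *)
From mathcomp Require Import all_boot all_order all_algebra.
Set Implicit Arguments. Unset Strict Implicit. Unset Printing Implicit Defensive.
Import Order.TTheory GRing.Theory Num.Theory.
Local Open Scope ring_scope.

(* Brand-effects model: n advertisers indexed by 'I_n, s positions indexed by
   'I_s (position k in the paper is the ordinal with value k-1). *)
Section BrandEffects.
Variables (R : realFieldType) (n s : nat).
Variables (brand : 'I_n -> bool) (q b : 'I_n -> R) (beta eta : 'I_s -> R).

Definition pos_score (i : 'I_n) (k : 'I_s) : R := if brand i then beta k else eta k.

Definition click_prob (i : 'I_n) (k : 'I_s) : R := pos_score i k * q i.

Definition ecpm (i : 'I_n) : R := b i * q i.

Definition norm_ecpm (i : 'I_n) (k : 'I_s) : R := pos_score i k * b i * q i.

Definition allocation (a : 'I_s -> 'I_n) : Prop := injective a.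

Definition welfare (a : 'I_s -> 'I_n) : R := \sum_(k < s) b (a k) * click_prob (a k) k.

Definition unplaced (a : 'I_s -> 'I_n) (k : 'I_s) (i : 'I_n) : Prop :=
  forall j : 'I_s, (j < k)%N -> a j <> i.

Definition greedy_alloc (a : 'I_s -> 'I_n) : Prop :=
  allocation a /\
  forall k : 'I_s, unplaced a k (a k) /\
    forall i : 'I_n, unplaced a k i -> norm_ecpm i k <= norm_ecpm (a k) k.

Definition standard_alloc (a : 'I_s -> 'I_n) : Prop :=
  allocation a /\
  forall k : 'I_s, unplaced a k (a k) /\
    forall i : 'I_n, unplaced a k i -> ecpm i <= ecpm (a k).

Definition valid_instance : Prop :=
  (0 < s)%N /\ (s <= n)%N /\
  (forall i, 0 <= q i) /\ (forall i, 0 <= b i) /\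
  (forall k1 k2 : 'I_s, (k1 <= k2)%N -> beta k2 <= beta k1) /\
  (forall k1 k2 : 'I_s, (k1 <= k2)%N -> eta k2 <= eta k1) /\
  (forall k : 'I_s, val k = 0%N -> beta k = 1 /\ eta k = 1) /\
  (forall (i : 'I_n) (k : 'I_s), 0 <= beta k * q i <= 1 /\ 0 <= eta k * q i <= 1).

End BrandEffects.

(* Main.v *)
Require Import Defs.
From mathcomp Require Import all_boot all_order all_algebra.
From mathcomp Require Import lra.
Import Order.TTheory GRing.Theory Num.Theory.
Local Open Scope ring_scope.
Section Inst.
Variable R : realFieldType.
Definition bI (i : 'I_3) : R := if val i == 0%N then 3 else if val i == 1%N then 2 else 3/2.
Definition qI (i : 'I_3) : R := 1.
Definition brI (i : 'I_3) : bool := val i == 1%N.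
Definition betaI (k : 'I_3) : R := if val k == 0%N then 1 else if val k == 1%N then 1/2 else 0.
Definition etaI (k : 'I_3) : R := 1.
Definition o0 : 'I_3 := @Ordinal 3 0 isT.
Definition o1 : 'I_3 := @Ordinal 3 1 isT.
Definition o2 : 'I_3 := @Ordinal 3 2 isT.
Definition gI (k : 'I_3) : 'I_3 := match val k with 1 => o2 | 2 => o1 | _ => o0 end.

Ltac ord3 := case=> [[|[|[|?]]] ?] //=.

Lemma gI_ok : greedy_alloc brI qI bI betaI etaI gI.
Proof.
split.
  ord3; ord3; move/(congr1 val) => //= _; exact: val_inj.
rewrite /unplaced /norm_ecpm /pos_score /brI /qI /bI /betaI /etaI.
ord3; split.
all: try (ord3 => // _; move/(congr1 val) => //).
all: ord3 => Hi; try lra.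
all: first [ by case: (Hi o0 isT); apply: val_inj | by case: (Hi o1 isT); apply: val_inj ].
Qed.

Lemma sI_ok : standard_alloc qI bI (fun k => k).
Proof.
split; first by [].
rewrite /unplaced /ecpm /qI /bI.
ord3; split.
all: try (ord3 => // _; move/(congr1 val) => //).
all: ord3 => Hi; try lra.
all: first [ by case: (Hi o0 isT); apply: val_inj | by case: (Hi o1 isT); apply: val_inj ].
Qed.

Lemma valid : valid_instance qI bI betaI etaI.
Proof.
rewrite /valid_instance /qI /bI /betaI /etaI; split=> //; split=> //.
split; first by move=> i; lra.
split; first by ord3; lra.
split; first by ord3; ord3; lra.
split; first by move=> *; lra.
split; first by ord3.
by ord3; ord3; lra.
Qed.
End Inst.

Theorem theorem7 (R : realFieldType) :
  exists (n s : nat) (brand : 'I_n -> bool) (q b : 'I_n -> R) (beta eta : 'I_s -> R),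
    valid_instance q b beta eta /\
    (exists a, greedy_alloc brand q b beta eta a) /\
    (exists a : 'I_s -> 'I_n, standard_alloc q b a) /\
    forall ag ast : 'I_s -> 'I_n,
      greedy_alloc brand q b beta eta ag ->
      standard_alloc q b ast ->
      welfare brand q b beta eta ag < welfare brand q b beta eta ast.
Proof.
exists 3%N, 3%N, brI, (@qI R), (@bI R), (@betaI R), (@etaI R).
split; first exact: valid.
split; first by exists gI; exact: gI_ok.
split; first by exists (fun k => k); exact: sI_ok.
move=> ag ast [_ Hg] [_ Hs].
rewrite /unplaced /norm_ecpm /pos_score /brI /qI /bI /betaI /etaI /ecpm in Hg Hs.
have a0 : ag o0 = o0.
  apply: val_inj; have := (Hg o0).2 o0 (fun j h => ltac:(by rewrite ltn0 in h)).
  case: (ag o0) => [[|[|[|?]]] ?] //= H; exfalso; move: H; clear; lra.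
have a1 : ag o1 = o2.
  apply: val_inj; have := (Hg o1).2 o2.
  have ne := (Hg o1).1 o0 isT; rewrite a0 in ne.
  move: ne; case: (ag o1) => [[|[|[|?]]] ?] //= ne H.
  - by exfalso; apply: ne; apply: val_inj.
  - have X : forall j : 'I_3, (j < 1)%N -> ag j <> o2.
      move=> j; rewrite ltnS leqn0 => /eqP j0; rewrite (_ : j = o0) ?a0 //; exact: val_inj.
    exfalso; have := H X; lra.
have a2 : ag o2 = o1.
  apply: val_inj.
  have ne0 := (Hg o2).1 o0 isT; rewrite a0 in ne0.
  have ne1 := (Hg o2).1 o1 isT; rewrite a1 in ne1.
  move: ne0 ne1; case: (ag o2) => [[|[|[|?]]] ?] //= ne0 ne1.
  - by exfalso; apply: ne0; apply: val_inj.
  - by exfalso; apply: ne1; apply: val_inj.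
have s0 : ast o0 = o0.
  apply: val_inj; have := (Hs o0).2 o0 (fun j h => ltac:(by rewrite ltn0 in h)).
  case: (ast o0) => [[|[|[|?]]] ?] //= H; exfalso; move: H; clear; lra.
have s1 : ast o1 = o1.
  apply: val_inj; have := (Hs o1).2 o1.
  have ne := (Hs o1).1 o0 isT; rewrite s0 in ne.
  move: ne; case: (ast o1) => [[|[|[|?]]] ?] //= ne H.
  - by exfalso; apply: ne; apply: val_inj.
  - have X : forall j : 'I_3, (j < 1)%N -> ast j <> o1.
      move=> j; rewrite ltnS leqn0 => /eqP j0; rewrite (_ : j = o0) ?s0 //; exact: val_inj.
    exfalso; have := H X; lra.
have s2 : ast o2 = o2.
  apply: val_inj.
  have ne0 := (Hs o2).1 o0 isT; rewrite s0 in ne0.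
  have ne1 := (Hs o2).1 o1 isT; rewrite s1 in ne1.
  move: ne0 ne1; case: (ast o2) => [[|[|[|?]]] ?] //= ne0 ne1.
  - by exfalso; apply: ne0; apply: val_inj.
  - by exfalso; apply: ne1; apply: val_inj.
rewrite /welfare !big_ord_recl !big_ord0.
have -> : ag ord0 = o0 by rewrite -a0; congr ag; exact: val_inj.
have -> : ag (lift ord0 ord0) = o2 by rewrite -a1; congr ag; exact: val_inj.
have -> : ag (lift ord0 (lift ord0 ord0)) = o1 by rewrite -a2; congr ag; exact: val_inj.
have -> : ast ord0 = o0 by rewrite -s0; congr ast; exact: val_inj.
have -> : ast (lift ord0 ord0) = o1 by rewrite -s1; congr ast; exact: val_inj.
have -> : ast (lift ord0 (lift ord0 ord0)) = o2 by rewrite -s2; congr ast; exact: val_inj.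
rewrite /click_prob /pos_score /brI /qI /bI /betaI /etaI /=.
lra.
Qed.
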